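(* Let $G$ be a nonabelian group and let $\psi_1,\dots,\psi_t\in\operatorname{End}(G)$ satisfy $\psi_i([G,G])\le Z(G)$ for all $i$ and $[\psi_i(G),\psi_j(G)]\subseteq Z(G)$ for all $1\le i,j\le t$. For $1\le i\le t$ and $\alpha\in\mathscr{E}$ define $g\circ_{\psi_i,\alpha}h=g\,\psi_i(\alpha(g))\,h\,\psi_i(\alpha(g))^{-1}$. Then \[\Big(G,\ \bigcup_{i=1}^t\{\circ_{\psi_i,\alpha}:\alpha\in\mathscr{E}\}\Big)\] is a brace block.
   Context: $Z(G)$ is the center and $[G,G]$ the commutator subgroup; $[\psi_i(G),\psi_j(G)]$ is the subgroup generated by commutators of elements of $\psi_i(G)$ and $\psi_j(G)$. $\mathscr{E}$ denotes the set of formal expressions $\alpha=n_1\phi_1+\cdots+n_s\phi_s$ with $n_k\in\mathbb Z$, $\phi_k\in\operatorname{End}(G)$ (the free group on $\operatorname{End}(G)$, written additively), acting on $G$ by $\alpha(g)=\phi_1(g^{n_1})\cdots\phi_s(g^{n_s})$. A skew left brace is a triple $(B,\cdot,\circ)$ where $(B,\cdot),(B,\circ)$ are groups and $a\circ(b\cdot c)=(a\circ b)\cdot a^{-1}\cdot(a\circ c)$ for all $a,b,c$, with $a^{-1}$ the inverse in $(B,\cdot)$. A brace block is a set $B$ with a collection $\mathscr O$ of binary operations on $B$ such that $(B,\circ,\star)$ is a skew left brace for every $\circ,\star\in\mathscr O$. *)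

(* Defs.v *)
From Stdlib Require Import ZArith List.
Import ListNotations.
Set Implicit Arguments.

(* A group structure on a carrier type T (left axioms suffice). *)
Record group (T : Type) := Group {
  gmul : T -> T -> T;
  gone : T;
  ginv : T -> T;
  gmulA : forall x y z, gmul x (gmul y z) = gmul (gmul x y) z;
  gmul1l : forall x, gmul gone x = x;
  gmulVl : forall x, gmul (ginv x) x = gone
}.
Arguments gmul {T} g _ _.
Arguments gone {T} g.
Arguments ginv {T} g _.

Section Defs.
Variables (T : Type) (G : group T).
Local Notation "x * y" := (gmul G x y).

Definition is_endo (f : T -> T) : Prop := forall x y, f (x * y) = f x * f y.

Definition center (x : T) : Prop := forall y, x * y = y * x.

Definition commutator (x y : T) : T := ginv G x * ginv G y * x * y.

Definition subgroup (H : T -> Prop) : Prop :=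
  H (gone G) /\ (forall x y, H x -> H y -> H (x * y)) /\ (forall x, H x -> H (ginv G x)).

Definition generated (S : T -> Prop) (x : T) : Prop :=
  forall H, subgroup H -> (forall y, S y -> H y) -> H x.

Definition commset (A B : T -> Prop) : T -> Prop :=
  generated (fun z => exists x y, A x /\ B y /\ z = commutator x y).

Definition fullset (x : T) : Prop := True.

Definition derived : T -> Prop := commset fullset fullset.

Definition image (f : T -> T) (x : T) : Prop := exists g, x = f g.

Definition gpow (g : T) (n : Z) : T :=
  match n with
  | Z0 => gone G
  | Zpos p => Nat.iter (Pos.to_nat p) (fun x => x * g) (gone G)
  | Zneg p => ginv G (Nat.iter (Pos.to_nat p) (fun x => x * g) (gone G))
  end.

(* formal expressions n_1 phi_1 + ... + n_s phi_s, as words *)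
Definition expr : Type := list (Z * (T -> T)).
Definition expr_valid (a : expr) : Prop := forall p, In p a -> is_endo (snd p).

Definition act (a : expr) (g : T) : T :=
  fold_right (fun p acc => snd p (gpow g (fst p)) * acc) (gone G) a.

Definition circ (psi : T -> T) (a : expr) (g h : T) : T :=
  g * psi (act a g) * h * ginv G (psi (act a g)).

End Defs.

Section Brace.
Variable T : Type.

Definition group_op_with (op : T -> T -> T) (e : T) (inv : T -> T) : Prop :=
  (forall x y z, op x (op y z) = op (op x y) z) /\
  (forall x, op e x = x /\ op x e = x /\ op (inv x) x = e /\ op x (inv x) = e).

Definition is_group_op (op : T -> T -> T) : Prop :=
  exists e inv, group_op_with op e inv.

Definition skew_left_brace (dot o : T -> T -> T) : Prop :=
  exists e inv, group_op_with dot e inv /\ is_group_op o /\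
  forall a b c, o a (dot b c) = dot (dot (o a b) (inv a)) (o a c).

Definition brace_block (O : (T -> T -> T) -> Prop) : Prop :=
  forall o1 o2, O o1 -> O o2 -> skew_left_brace o1 o2.
End Brace.

(* Main.v *)
Require Import Defs.
From Stdlib Require Import ZArith List FunctionalExtensionality.
Import ListNotations.
Set Implicit Arguments.

Section GL.
Variables (T : Type) (G : group T).
Local Notation "x * y" := (gmul G x y).
Local Notation inv := (ginv G).
Local Notation one := (gone G).

Lemma mulA x y z : x * (y * z) = x * y * z. Proof. apply gmulA. Qed.
Lemma mul1l x : one * x = x. Proof. apply gmul1l. Qed.
Lemma mulVl x : inv x * x = one. Proof. apply gmulVl. Qed.
Lemma mulVr x : x * inv x = one.
Proof.
  rewrite <- (mul1l (x * inv x)). rewrite <- (mulVl (inv x)) at 1.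
  rewrite <- mulA. rewrite (mulA (inv x) x (inv x)). rewrite mulVl, mul1l. apply mulVl.
Qed.
Lemma mul1r x : x * one = x.
Proof. rewrite <- (mulVl x), mulA, mulVr. apply mul1l. Qed.
Lemma mulKl x y : inv x * (x * y) = y. Proof. rewrite mulA, mulVl; apply mul1l. Qed.
Lemma mulKr x y : x * (inv x * y) = y. Proof. rewrite mulA, mulVr; apply mul1l. Qed.
Lemma mulVK x y : y * x * inv x = y. Proof. rewrite <- mulA, mulVr; apply mul1r. Qed.
Lemma mulKV x y : y * inv x * x = y. Proof. rewrite <- mulA, mulVl; apply mul1r. Qed.
Lemma cancel_l x y z : x * y = x * z -> y = z.
Proof. intro H. rewrite <- (mulKl x y), H. apply mulKl. Qed.
Lemma inv_uniq x y : x * y = one -> y = inv x.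
Proof. intro H. apply (cancel_l x). rewrite H, mulVr. reflexivity. Qed.
Lemma inv_inv x : inv (inv x) = x.
Proof. symmetry. apply inv_uniq. apply mulVl. Qed.
Lemma inv_mul x y : inv (x * y) = inv y * inv x.
Proof. symmetry. apply inv_uniq. rewrite !mulA, mulVK. apply mulVr. Qed.
Lemma inv_one : inv one = one.
Proof. symmetry. apply inv_uniq. apply mul1l. Qed.

Definition C (c h : T) := c * h * inv c.
Lemma C_mul p q h : C (p * q) h = C p (C q h).
Proof. unfold C. rewrite inv_mul, !mulA. reflexivity. Qed.
Lemma C_one h : C one h = h.
Proof. unfold C. rewrite inv_one, mul1l; apply mul1r. Qed.
Lemma C_inv p h : C (inv p) (C p h) = h.
Proof. rewrite <- C_mul, mulVl. apply C_one. Qed.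
Lemma C_inv' p h : C p (C (inv p) h) = h.
Proof. rewrite <- C_mul, mulVr. apply C_one. Qed.
Lemma C_hom c x y : C c (x * y) = C c x * C c y.
Proof. unfold C. rewrite !mulA, mulKV. reflexivity. Qed.
Lemma C_1 c : C c one = one.
Proof. unfold C. rewrite mul1r. apply mulVr. Qed.

Definition commC p q := forall h, C p (C q h) = C q (C p h).

Lemma commC_sym p q : commC p q -> commC q p.
Proof. intros H h. symmetry. apply H. Qed.
Lemma commC_mul p q r : commC p q -> commC p r -> commC p (q * r).
Proof. intros H1 H2 h. rewrite !C_mul, <- H2, H1. reflexivity. Qed.
Lemma commC_inv p q : commC p q -> commC p (inv q).
Proof.
  intros H h. rewrite <- (C_inv q (C p (C (inv q) h))) at 1.
  rewrite <- H, C_inv'. reflexivity.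
Qed.
Lemma commC_one p : commC p one.
Proof. intro h. rewrite !C_one. reflexivity. Qed.

Fixpoint npow (g : T) (k : nat) : T := match k with O => one | S k => npow g k * g end.
Lemma iter_npow g k : Nat.iter k (fun x => x * g) one = npow g k.
Proof. induction k; simpl; [reflexivity| rewrite IHk; reflexivity]. Qed.
Lemma gpow_eq g n : gpow G g n = match n with Z0 => one | Zpos p => npow g (Pos.to_nat p)
   | Zneg p => inv (npow g (Pos.to_nat p)) end.
Proof. destruct n; simpl; rewrite ?iter_npow; reflexivity. Qed.

Lemma commC_npow p q k : commC p q -> commC p (npow q k).
Proof. intro H. induction k; simpl. apply commC_one. apply commC_mul; auto. Qed.
Lemma commC_gpow p q n : commC p q -> commC p (gpow G q n).
Proof. intro H. rewrite gpow_eq. destruct n; auto using commC_one, commC_npow, commC_inv. Qed.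

Lemma C_npow_mul p q k : commC p q -> forall h, C (npow (p * q) k) h = C (npow p k) (C (npow q k) h).
Proof.
  intros H. induction k; intro h; simpl. rewrite !C_one; reflexivity.
  pose proof (@commC_npow p q k H) as H2.
  rewrite !C_mul, IHk, <- H2. reflexivity.
Qed.
Lemma C_gpow_mul p q n : commC p q -> forall h, C (gpow G (p * q) n) h = C (gpow G p n) (C (gpow G q n) h).
Proof.
  intros H h. rewrite !gpow_eq. destruct n.
  - rewrite !C_one; reflexivity.
  - apply C_npow_mul; auto.
  - set (k := Pos.to_nat p0).
    set (X := C (inv (npow p k)) (C (inv (npow q k)) h)).
    assert (E : C (npow (p * q) k) X = h).
    { rewrite C_npow_mul by auto. unfold X.
      pose proof (@commC_inv _ _ (@commC_npow _ _ k (@commC_sym _ _ (@commC_npow p q k H)))) as H3.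
      rewrite H3. rewrite !C_inv'. reflexivity. }
    rewrite <- E at 1. rewrite C_inv. reflexivity.
Qed.

Lemma endo_one f : is_endo G f -> f one = one.
Proof. intro H. apply (cancel_l (f one)). rewrite <- H, !mul1r. reflexivity. Qed.
Lemma endo_inv f x : is_endo G f -> f (inv x) = inv (f x).
Proof. intro H. apply inv_uniq. rewrite <- H, mulVr. apply endo_one; auto. Qed.
Lemma endo_npow f x k : is_endo G f -> f (npow x k) = npow (f x) k.
Proof. intro H. induction k; simpl. apply endo_one; auto. rewrite H, IHk; reflexivity. Qed.
Lemma endo_gpow f x n : is_endo G f -> f (gpow G x n) = gpow G (f x) n.
Proof. intro H. rewrite !gpow_eq. destruct n; auto using endo_one. apply endo_npow; auto.
  rewrite endo_inv, endo_npow; auto. Qed.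
Lemma npow_one k : npow one k = one.
Proof. induction k; simpl; auto. rewrite IHk; apply mul1l. Qed.
Lemma gpow_one n : gpow G one n = one.
Proof. rewrite gpow_eq. destruct n; rewrite ?npow_one, ?inv_one; auto. Qed.

Definition goodF (F : T -> T) :=
  (forall h, C (F one) h = h) /\
  (forall x y h, C (F (x * y)) h = C (F x) (C (F y) h)) /\
  (forall x y, commC (F x) (F y)).

Lemma goodF_conj F : goodF F -> forall c y h, C (F (C c y)) h = C (F y) h.
Proof.
  intros [H1 [Hm Hc]] c y h. unfold C at 2.
  rewrite !Hm. rewrite Hc. rewrite <- (Hm c), mulVr, H1. reflexivity.
Qed.

Lemma goodF_inv F : goodF F -> forall x h, C (F (inv x)) (C (F x) h) = h.
Proof. intros [H1 [Hm Hc]] x h. rewrite <- Hm, mulVl. apply H1. Qed.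
Lemma goodF_inv' F : goodF F -> forall x h, C (F x) (C (F (inv x)) h) = h.
Proof. intros [H1 [Hm Hc]] x h. rewrite <- Hm, mulVr. apply H1. Qed.

Definition opF (F : T -> T) x y := x * C (F x) y.
Definition invF (F : T -> T) x := C (F (inv x)) (inv x).

Lemma C_inv_hom c x : C c (inv x) = inv (C c x).
Proof. apply inv_uniq. rewrite <- C_hom, mulVr. apply C_1. Qed.

Lemma goodF_group F : goodF F -> group_op_with (opF F) one (invF F).
Proof.
  intro HF. pose proof HF as [H1 [Hm Hc]]. unfold opF, invF. split.
  - intros x y z. rewrite C_hom, mulA. f_equal. rewrite Hm, goodF_conj by auto. reflexivity.
  - intro x. split; [|split; [|split]].
    + rewrite H1. apply mul1l.
    + rewrite C_1. apply mul1r.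
    + rewrite goodF_conj by auto. rewrite <- C_hom, mulVl. apply C_1.
    + rewrite goodF_inv' by auto. apply mulVr.
Qed.

Lemma goodF_brace F M : goodF F -> goodF M -> (forall x y, commC (F x) (M y)) ->
  skew_left_brace (opF F) (opF M).
Proof.
  intros HF HM HFM. exists one, (invF F). split; [apply goodF_group; auto|].
  split; [exists one, (invF M); apply goodF_group; auto|].
  pose proof HF as [F1 [Fm Fc]]. pose proof HM as [M1 [Mm Mc]].
  intros a b c. unfold opF, invF.
  rewrite C_hom, mulA.
  rewrite (Fm a (C (M a) b)), (goodF_conj HF (M a) b), (Fc a b), (goodF_inv' HF).
  rewrite (Fm (a * C (M a) b) (C (F b) (inv a))), (Fm a (C (M a) b)),
    (goodF_conj HF (M a) b), (goodF_conj HF (F b) (inv a)), (Fc a b), (goodF_inv' HF).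
  rewrite C_hom, (mulA _ (C (F b) a)), <- (mulA _ (C (F b) (inv a)) (C (F b) a)),
    <- C_hom, mulVl, C_1, mul1r.
  rewrite HFM. reflexivity.
Qed.


Lemma C_central z h : center G z -> C z h = h.
Proof. intro Hz. unfold C. rewrite Hz. apply mulVK. Qed.

Lemma commC_central x y : center G (commutator G x y) -> commC x y.
Proof.
  intros Hz h. rewrite <- !C_mul.
  assert (E : y * x * commutator G x y = x * y).
  { unfold commutator. rewrite !mulA, mulVK, mulVr, mul1l. reflexivity. }
  rewrite <- E, C_mul, (C_central h Hz). reflexivity.
Qed.

Lemma act_one a : expr_valid G a -> act G a one = one.
Proof.
  induction a as [|p a IH]; intro Hv; simpl. reflexivity.
  assert (Hp : is_endo G (snd p)) by (apply Hv; left; reflexivity).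
  rewrite IH by (intros q Hq; apply Hv; right; exact Hq).
  rewrite gpow_one, (endo_one Hp). apply mul1l.
Qed.

Lemma goodF_act (psi : T -> T) (a : expr T) :
  is_endo G psi -> expr_valid G a ->
  (forall u v, commC (psi u) (psi v)) ->
  goodF (fun g => psi (act G a g)).
Proof.
  intros Hpsi Hv Hc. split; [|split].
  - intro h. rewrite act_one by auto. rewrite endo_one by auto. apply C_one.
  - induction a as [|p a IH]; intros x y h; simpl.
    + rewrite endo_one, !C_one by auto. reflexivity.
    + assert (Hp : is_endo G (snd p)) by (apply Hv; left; reflexivity).
      assert (Hv' : expr_valid G a) by (intros q Hq; apply Hv; right; exact Hq).
      assert (Hcomp : is_endo G (fun z => psi (snd p z))).
      { intros u v. rewrite Hp, Hpsi. reflexivity. }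
      rewrite !Hpsi, !C_mul, IH by auto.
      assert (Eg : forall z n, psi (snd p (gpow G z n)) = gpow G (psi (snd p z)) n).
      { intros z n. exact (endo_gpow z n Hcomp). }
      rewrite !Eg, Hp, Hpsi. rewrite C_gpow_mul by auto.
      f_equal.
      pose proof (@commC_gpow (psi (act G a x)) (psi (snd p y)) (fst p) (Hc _ _)) as H3.
      rewrite H3. reflexivity.
  - intros x y. apply Hc.
Qed.

End GL.

Theorem corollary3p4 (T : Type) (G : group T) (t : nat) (psi : nat -> T -> T) :
  (exists g h, gmul G g h <> gmul G h g) ->
  (forall i, i < t -> is_endo G (psi i)) ->
  (forall i, i < t -> forall x, derived G x -> center G (psi i x)) ->
  (forall i j, i < t -> j < t ->
     forall x, commset G (image (psi i)) (image (psi j)) x -> center G x) ->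
  brace_block (fun op : T -> T -> T =>
    exists i (a : expr T), i < t /\ expr_valid G a /\ op = circ G (psi i) a).
Proof.
  intros _ Hend _ Hcs o1 o2 [i [a [Hi [Ha E1]]]] [j [b [Hj [Hb E2]]]].
  assert (Hc : forall i j, i < t -> j < t -> forall u v, commC G (psi i u) (psi j v)).
  { intros i' j' Hi' Hj' u v. apply commC_central. apply (Hcs i' j' Hi' Hj').
    intros H _ HS. apply HS. exists (psi i' u), (psi j' v). split; [exists u; reflexivity|].
    split; [exists v; reflexivity| reflexivity]. }
  assert (Eq : forall k c, circ G (psi k) c = opF G (fun g => psi k (act G c g))).
  { intros k c. apply FunctionalExtensionality.functional_extensionality; intro x.
    apply FunctionalExtensionality.functional_extensionality; intro y.
    unfold circ, opF, C. rewrite !mulA. reflexivity. }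
  subst o1 o2. rewrite !Eq.
  apply goodF_brace; try apply goodF_act; auto.
Qed.
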